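(* Let $(\lambda_1,v)$ be a real eigenpair of the $n\times n$ real matrix $A=[a_{ij}]$, with every component of $v$ nonzero. Let $S=\mathrm{diag}(v)$ and $B=[b_{ij}]=S^{-1}AS$. If $\lambda$ is an eigenvalue of $A$ different from $\lambda_1$, then $$|\lambda|\le\max_{1\le i\le n}\{|a_{ii}|+\hat r_i(B)\}.$$ Moreover: (1) If $n$ is even and $F=[f_{ij}]=[b_{ij}-\beta_j]$, where $\beta_j$ is the $(n/2)$-th largest element among $b_{1j},\dots,b_{j-1,j},b_{j+1,j},\dots,b_{nj}$, then $|\lambda|\le\max_{1\le i\le n}\{|f_{ii}|+\hat r_i(F)\}$. (2) If $n$ is odd with $n\ge 3$, and $F=[f_{ij}]=[b_{ij}+\beta_j]$, $G=[g_{ij}]=[b_{ij}+\gamma_j]$, where $\beta_j$ and $\gamma_j$ are, respectively, the negatives of the $\frac{n-1}{2}$-th and the $\frac{n+1}{2}$-th largest numbers among $b_{1j},\dots,b_{j-1,j},b_{j+1,j},\dots,b_{nj}$, then $$|\lambda|\le\min\Big\{\max_{1\le i\le n}\{|f_{ii}|+\hat r_i(F)\},\ \max_{1\le i\le n}\{|g_{ii}|+\hat r_i(G)\}\Big\}.$$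
   Context: For a real $n\times n$ matrix $M=[m_{ij}]$ and index $i$, let $y_1\ge\dots\ge y_n$ be the non-increasing rearrangement of the $i$-th column of $M$ with its diagonal entry replaced by $0$, i.e. of $m_{1i},\dots,m_{i-1,i},0,m_{i+1,i},\dots,m_{ni}$. Define $\hat r_i(M)=\sum_{t=1}^{(n-1)/2}y_t-\sum_{t=(n+3)/2}^{n}y_t$ if $n$ is odd and $\hat r_i(M)=\sum_{t=1}^{n/2}y_t-\sum_{t=n/2+1}^{n}y_t$ if $n$ is even (the radius of the Gershgorin disc of the second type obtained from the $i$-th column of $M$). ''The $t$-th largest element'' of a list refers to the $t$-th entry of the list sorted in non-increasing order (with repetitions). *)

(* Defs.v *)
From HB Require Import structures.
From mathcomp Require Import all_boot all_order all_algebra.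
From mathcomp Require Import reals.
From mathcomp Require Import complex.
Set Implicit Arguments. Unset Strict Implicit. Unset Printing Implicit Defensive.
Import Order.TTheory GRing.Theory Num.Theory.
Local Open Scope ring_scope.

Definition sort_dec (R : realDomainType) (s : seq R) : seq R :=
  sort (fun x y : R => y <= x) s.

Definition col0 (R : realDomainType) (n : nat) (M : 'M[R]_n) (i : 'I_n) : seq R :=
  [seq (if j == i then 0 else M j i) | j <- enum 'I_n].

(* hat r_i(M): with y_1 >= ... >= y_n the sorted list (0-based list s),
   odd n : sum_{t=1}^{(n-1)/2} y_t - sum_{t=(n+3)/2}^{n} y_t
   even n: sum_{t=1}^{n/2} y_t - sum_{t=n/2+1}^{n} y_t
   In both cases: first n./2 entries minus the last n./2 entries. *)
Definition rhat (R : realDomainType) (n : nat) (M : 'M[R]_n) (i : 'I_n) : R :=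
  let s := sort_dec (col0 M i) in
  \sum_(x <- take n./2 s) x - \sum_(x <- drop (n - n./2) s) x.

(* The t-th largest (t >= 1, with repetitions) element among the
   off-diagonal entries b_{1j},...,b_{j-1,j},b_{j+1,j},...,b_{nj} of column j. *)
Definition kth_largest_offdiag (R : realDomainType) (n : nat) (M : 'M[R]_n)
    (j : 'I_n) (t : nat) : R :=
  nth 0 (sort_dec [seq M k j | k <- enum 'I_n & k != j]) t.-1.

Definition gersh2_bound2 (R : realDomainType) (n : nat) (D M : 'M[R]_n) : R :=
  \big[Num.max/0]_(i < n) (`|D i i| + rhat M i).

Definition gersh2_bound (R : realDomainType) (n : nat) (M : 'M[R]_n) : R :=
  gersh2_bound2 M M.

(* Main.v *)
Require Import Defs.
From HB Require Import structures.
From mathcomp Require Import all_boot all_order all_algebra.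
From mathcomp Require Import reals.
From mathcomp Require Import complex.
From mathcomp Require Import zify ring lra.
Import Order.TTheory GRing.Theory Num.Theory.
Local Open Scope ring_scope.

Lemma sum_const_seq (R : realDomainType) (l : seq R) (c : R) :
  \sum_(x <- l) c = c *+ size l.
Proof. by elim: l => [|a l IH]; rewrite ?big_nil ?big_cons ?IH ?mulrS. Qed.

Lemma median (R : realDomainType) (s : seq R) :
  sorted (fun x y : R => y <= x) s ->
  \sum_(x <- s) `|x - nth 0 s (size s)./2| <=
  \sum_(x <- take (size s)./2 s) x - \sum_(x <- drop (size s - (size s)./2) s) x.
Proof.
move=> Hs.
set n := size s; set k := n./2; set t := nth 0 s k.
have Hn : (odd n + k + k = n)%N by rewrite -addnA addnn odd_double_half.
have tr : transitive (fun x y : R => y <= x) by move=> a b c h1 h2; exact: le_trans h2 h1.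
have rf : reflexive (fun x y : R => y <= x) by move=> a; exact: lexx.
have Hle := sorted_leq_nth tr rf 0 Hs.
have ge : forall x, x \in take k s -> t <= x.
  move=> x /(nthP 0) [i Hi <-].
  have Hk : (k <= n)%N by lia.
  rewrite size_takel // in Hi.
  rewrite nth_take //; apply: (Hle i k); rewrite ?inE /=; lia.
have le : forall x, x \in drop k s -> x <= t.
  move=> x /(nthP 0) [i Hi <-].
  rewrite size_drop in Hi.
  rewrite -/n in Hi; rewrite nth_drop; apply: (Hle k (k + i)%N); rewrite ?inE /= -/n; lia.
have -> : \sum_(x <- s) `|x - t| = \sum_(x <- take k s ++ drop k s) `|x - t| by rewrite cat_take_drop.
rewrite big_cat /=.
rewrite (eq_big_seq (fun x => x - t)); last first.
  by move=> x /ge Hx; rewrite ger0_norm // subr_ge0.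
rewrite [X in _ + X](eq_big_seq (fun x => t - x)); last first.
  by move=> x /le Hx; rewrite distrC ger0_norm // subr_ge0.
rewrite !sumrB !sum_const_seq size_drop size_takel -/n; last by lia.
case: (boolP (odd n)) => Ho; [rewrite Ho /= in Hn | rewrite (negbTE Ho) /= in Hn].
  have -> : (n - k = k.+1)%N by lia.
  rewrite (drop_nth 0) ?big_cons -/t; last by rewrite -/n; lia.
  rewrite mulrS; lra.
have -> : (n - k = k)%N by lia.
lra.
Qed.

Local Open Scope complex_scope.

Lemma normC_real (R : rcfType) (x : R) : `|x%:C| = `|x|%:C.
Proof. by rewrite normc_def /= expr0n /= addr0 sqrtr_sqr. Qed.

Lemma key (R : realType) n (M : 'M[R]_n) (u : 'I_n -> R[i]) (l : R[i]) :
  (exists j, u j != 0) -> \sum_i u i = 0 ->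
  (forall j, \sum_i u i * (M i j)%:C = l * u j) ->
  exists j, `|l| <= (`|M j j| + rhat M j)%:C.
Proof.
move=> [i0 Hi0] Hsum Heig.
case: (real_arg_maxP (i0:=i0) (P:=xpredT) (F := fun i => `|u i|) isT
   (fun i _ => normr_real _)) => j _ Hj.
exists j.
set y := fun i => if i == j then 0 else M i j.
set s := sort_dec (Defs.col0 M j).
set t := nth 0 s n./2.
have Hs : size s = n by rewrite size_sort size_map size_enum_ord.
have E1 : (l - (M j j)%:C) * u j = \sum_i u i * (y i - t)%:C.
  under eq_bigr => i _ do rewrite rmorphB mulrBr.
  rewrite sumrB -big_distrl /= Hsum mul0r subr0.
  rewrite (bigD1 j) //= /y eqxx mulr0 add0r.
  have := Heig j; rewrite (bigD1 j) //= => H.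
  have -> : \sum_(i | i != j) u i * (if i == j then 0 else M i j)%:C =
            \sum_(i | i != j) u i * (M i j)%:C.
    by apply: eq_bigr => i /negbTE ->.
  rewrite mulrBl -H; ring.
have ujpos : 0 < `|u j|.
  rewrite -normr_gt0 in Hi0; have := Hj i0 isT.
  by move=> /(lt_le_trans Hi0).
have E2 : `|l - (M j j)%:C| * `|u j| <= `|u j| * (\sum_i `|y i - t|)%:C.
  rewrite -normrM E1 rmorph_sum mulr_sumr.
  apply: le_trans (ler_norm_sum _ _ _) _.
  apply: ler_sum => i _.
  rewrite normrM normC_real.
  by apply: ler_wpM2r; [rewrite ler0c | exact: Hj].
have E3 : \sum_i `|y i - t| <= rhat M j.
  have -> : \sum_i `|y i - t| = \sum_(x <- s) `|x - t|.
    rewrite (perm_big _ (permEl (perm_sort _ _))) /Defs.col0 big_map big_enum /=.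
    by apply: eq_bigr.
  have Hsorted : sorted (fun x y : R => y <= x) s.
    by apply: sort_sorted => a b; exact: le_total.
  rewrite /rhat -/s; have := @median _ s Hsorted.
  by rewrite Hs.
have E4 : `|l - (M j j)%:C| <= (rhat M j)%:C.
  rewrite -(ler_pM2r ujpos); apply: le_trans E2 _.
  by rewrite mulrC ler_pM2r // lecR.
rewrite rmorphD /= -normC_real.
have -> : l = (M j j)%:C + (l - (M j j)%:C) by rewrite addrC subrK.
apply: le_trans (ler_normD _ _) _.
apply: lerD => //.
Qed.

Theorem theorem8 (R : realType) (n : nat) (A : 'M[R]_n) (lambda1 : R)
    (v : 'cV[R]_n) (lambda : R[i]) :
  A *m v = lambda1 *: v ->
  (forall k : 'I_n, v k 0 != 0) ->
  eigenvalue (map_mx (real_complex R) A) lambda ->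
  lambda != (lambda1%:C)%C ->
  let S := diag_mx v^T in
  let B := invmx S *m A *m S in
  [/\ `|lambda| <= (gersh2_bound2 A B)%:C%C,
      ~~ odd n ->
        let F := \matrix_(i < n, j < n)
                   (B i j - kth_largest_offdiag B j n./2) in
        `|lambda| <= (gersh2_bound F)%:C%C
    & odd n -> (3 <= n)%N ->
        let F := \matrix_(i < n, j < n)
                   (B i j - kth_largest_offdiag B j (n.-1)./2) in
        let G := \matrix_(i < n, j < n)
                   (B i j - kth_largest_offdiag B j (n.+1)./2) in
        `|lambda| <= (Num.min (gersh2_bound F) (gersh2_bound G))%:C%C].
Proof.
move=> HAv Hv /eigenvalueP [w Hw wne0] Hne S B.
set Sinv := diag_mx (\row_i (v i 0)^-1).
have SinvS : Sinv *m S = 1%:M.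
  apply/matrixP => i j; rewrite mul_diag_mx !mxE.
  by case: eqP => [->|_]; rewrite ?mulr1n ?mulr0n ?mulr0 ?mulVf.
have Sunit : S \in unitmx.
  rewrite unitmxE det_diag unitfE; apply/prodf_neq0 => i _.
  by rewrite mxE.
have HinvS : invmx S = Sinv.
  by rewrite -[LHS]mul1mx -SinvS -mulmxA mulmxV ?mulmx1.
have HB : forall i j, B i j = (v i 0)^-1 * A i j * v j 0.
  move=> i j; rewrite /B HinvS mul_mx_diag mul_diag_mx !mxE.
  done.
have HBjj : forall j, B j j = A j j.
  by move=> j; rewrite HB mulrC mulrA mulfV ?mul1r.
set u := fun i => w 0 i * (v i 0)%:C.
have Hw' : forall j, \sum_i w 0 i * (A i j)%:C = lambda * w 0 j.
  move=> j; have := congr1 (fun M : 'M[R[i]]_(1, n) => M 0 j) Hw; rewrite /= !mxE => <-.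
  by apply: eq_bigr => i _; rewrite mxE.
have HuB : forall j, \sum_i u i * (B i j)%:C = lambda * u j.
  move=> j.
  have -> : \sum_i u i * (B i j)%:C = (\sum_i w 0 i * (A i j)%:C) * (v j 0)%:C.
    rewrite big_distrl; apply: eq_bigr => i _.
    rewrite /u -mulrA -rmorphM HB.
    have -> : v i 0 * ((v i 0)^-1 * A i j * v j 0) = A i j * v j 0.
      by rewrite -mulrA mulVKf.
    by rewrite rmorphM mulrA.
  by rewrite Hw' /u mulrA.
have Hsum : \sum_i u i = 0.
  have E : lambda * \sum_i u i = lambda1%:C * \sum_i u i.
    rewrite mulr_sumr.
    have -> : \sum_i lambda * u i = \sum_i (\sum_k w 0 k * (A k i)%:C) * (v i 0)%:C.
      by apply: eq_bigr => i _; rewrite Hw' /u mulrA.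
    under eq_bigr => i _ do rewrite big_distrl.
    rewrite exchange_big mulr_sumr /=; apply: eq_bigr => k _.
    under eq_bigr => i _ do rewrite -mulrA.
    rewrite -mulr_sumr /u.
    have := congr1 (fun M : 'M[R]_(n, 1) => M k 0) HAv; rewrite /= !mxE => Hk.
    have -> : \sum_i (A k i)%:C * (v i 0)%:C = (lambda1 * v k 0)%:C.
      by rewrite -Hk rmorph_sum; apply: eq_bigr => i _; rewrite rmorphM.
    rewrite rmorphM; ring.
  apply/eqP; move/eqP: E; rewrite -subr_eq0 -mulrBl mulf_eq0 subr_eq0.
  by rewrite (negbTE Hne).
have Hune0 : exists j, u j != 0.
  case: (pickP (fun i => w 0 i != 0)) => [i Hi | H].
    exists i; rewrite /u mulf_neq0 //.
    by rewrite eq_complex /= negb_and Hv.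
  case/negP: wne0; apply/eqP/rowP => i; rewrite mxE.
  by move/negbFE/eqP: (H i).
have gen : forall c : 'I_n -> R,
    `|lambda| <= (gersh2_bound (\matrix_(i < n, j < n) (B i j - c j)))%:C.
  move=> c.
  have Hc : forall j, \sum_i u i * ((\matrix_(i < n, j < n) (B i j - c j)) i j)%:C
              = lambda * u j.
    move=> j; under eq_bigr => i _ do rewrite mxE rmorphB mulrBr.
    by rewrite sumrB -big_distrl /= Hsum mul0r subr0 HuB.
  have [j Hj] := @key _ _ (\matrix_(i < n, j < n) (B i j - c j)) u lambda
    Hune0 Hsum Hc.
  apply: le_trans Hj _; rewrite lecR.
  exact: (le_bigmax _ (fun i => `|(\matrix_(i < n, j < n) (B i j - c j)) i i| +
                       rhat (\matrix_(i < n, j < n) (B i j - c j)) i) j).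
split.
- have [j Hj] := @key _ _ B u lambda Hune0 Hsum HuB.
  apply: le_trans Hj _; rewrite lecR HBjj.
  exact: (le_bigmax _ (fun i => `|A i i| + rhat B i) j).
- by move=> _; apply: gen.
- move=> _ _ /=.
  by rewrite minEle; case: ifP => _; apply: gen.
Qed.
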